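(* Let $G$ be a simple undirected connected graph on vertices $u_1,\dots,u_n$ with Laplacian $L$, let $u_a\neq u_b$ satisfy $N(u_a)\setminus\{u_b\}=N(u_b)\setminus\{u_a\}$, let $M=(\mathbf e_a-\mathbf e_b)(\mathbf e_a-\mathbf e_b)^T$, $\alpha\in\mathbb R$ and $L^\alpha=L+\alpha M$. Suppose $L$ is periodic at vertex $u_p$ at time $\tau\neq 0$. Then: (1) if $p\in\{a,b\}$ and $2\alpha\tau\in\pi(2\mathbb Z+1)$, then $L^\alpha$ exhibits perfect state transfer between $u_a$ and $u_b$ at time $\tau$; (2) if $p\notin\{a,b\}$, then $L^\alpha$ is periodic at $u_p$ at time $\tau$. *)

(* Defs.v *)
From HB Require Import structures.
From mathcomp Require Import all_boot all_order all_algebra.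
From mathcomp Require Import all_classical all_reals all_analysis.
Set Implicit Arguments.
Unset Strict Implicit.
Unset Printing Implicit Defensive.
Import Order.TTheory GRing.Theory Num.Theory.
Import numFieldNormedType.Exports.
Local Open Scope ring_scope.

Section QW.
Variable R : realType.
Variable n : nat.

(* k-th power of a square matrix (avoids needing n = m.+1 for the ring structure) *)
Definition mxpow (H : 'M[R]_n) (k : nat) : 'M[R]_n := iter k (mulmx H) 1%:M.

(* Transition matrix U(t) = exp(-i t H) = sum_m (-i t)^m H^m / m!, for a real
   symmetric H, split into real and imaginary parts:
     Re U(t) = sum_k (-1)^k t^(2k) H^(2k) / (2k)!
     Im U(t) = - sum_k (-1)^k t^(2k+1) H^(2k+1) / (2k+1)!   *)
Definition qw_re (H : 'M[R]_n) (t : R) (i j : 'I_n) : R :=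
  let u : R^nat := fun k : nat =>
    (-1) ^+ k * t ^+ (2 * k) / ((2 * k)`!)%:R * mxpow H (2 * k) i j in
  limn (series u : nat -> R).

Definition qw_im (H : 'M[R]_n) (t : R) (i j : 'I_n) : R :=
  let u : R^nat := fun k : nat =>
    (-1) ^+ k * t ^+ (2 * k).+1 / (((2 * k).+1)`!)%:R * mxpow H (2 * k).+1 i j in
  - limn (series u : nat -> R).

Definition qw_abs2 (H : 'M[R]_n) (t : R) (i j : 'I_n) : R :=
  qw_re H t i j ^+ 2 + qw_im H t i j ^+ 2.

Definition periodic_at (H : 'M[R]_n) (u : 'I_n) (t : R) : Prop :=
  qw_abs2 H t u u = 1.

Definition pst (H : 'M[R]_n) (u v : 'I_n) (t : R) : Prop :=
  qw_abs2 H t u v = 1.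

Definition laplacian (e : rel 'I_n) : 'M[R]_n :=
  \matrix_(i, j) (if i == j then (#|[set k | e i k]|)%:R
                  else if e i j then -1 else 0).

Definition edge_mx (a b : 'I_n) : 'M[R]_n :=
  let v : 'cV[R]_n := delta_mx a 0 - delta_mx b 0 in v *m v^T.

End QW.

Definition simple_connected_graph (n : nat) (e : rel 'I_n) : Prop :=
  symmetric e /\ irreflexive e /\ (forall x y : 'I_n, connect e x y).

Definition nbhd (n : nat) (e : rel 'I_n) (u : 'I_n) : {set 'I_n} := [set w | e u w].

(* Main.v *)
Require Import Defs.
From HB Require Import structures.
From mathcomp Require Import all_boot all_order all_algebra.
From mathcomp Require Import all_classical all_reals all_analysis.
From mathcomp Require Import ring lra zify.
Import Order.TTheory GRing.Theory Num.Theory.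
Import numFieldNormedType.Exports.
Local Open Scope ring_scope.

Section Ana.
Local Open Scope classical_set_scope.
Variable R : realType.

Definition ce (t : R) (P : nat -> R) : R^nat := fun k : nat =>
    (-1) ^+ k * t ^+ (2 * k) / ((2 * k)`!)%:R * P (2 * k)%N.
Definition co (t : R) (P : nat -> R) : R^nat := fun k : nat =>
    (-1) ^+ k * t ^+ (2 * k).+1 / (((2 * k).+1)`!)%:R * P (2 * k).+1.

Lemma dom_cvg {y : R} : 0 <= y ->
  cvgn (series (fun k : nat => \sum_(k * 2 <= i < k.+1 * 2) exp_coeff y i)).
Proof.
move=> y0; apply: cvgP.
exact: (cvg_series_cvg_series_group (is_cvg_series_exp_coeff y) (isT : (0 < 2)%N)).
Qed.

Lemma dom_le {y : R} {j : nat} (k : nat) : 0 <= y -> (j == 2 * k \/ j == (2 * k).+1)%N ->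
  exp_coeff y j <= \sum_(k * 2 <= i < k.+1 * 2) exp_coeff y i.
Proof.
move=> y0 hj.
have -> : (k.+1 * 2 = (k * 2).+2)%N by rewrite mulSn; lia.
rewrite big_nat_recr ?leqnSn // big_nat1 /=.
case: hj => /eqP ->; rewrite mulnC.
  by rewrite lerDl exp_coeff_ge0.
by rewrite lerDr exp_coeff_ge0.
Qed.


Lemma ce_cvg (t K : R) (P : nat -> R) : 0 <= K -> (forall m, `|P m| <= K ^+ m) ->
  cvgn (series (ce t P)).
Proof.
move=> K0 hP; apply: normed_cvg.
have y0 : 0 <= K * `|t| by rewrite mulr_ge0.
have := @series_le_cvg _ (fun k => `|ce t P k|) _ _ _ _ (dom_cvg y0); apply.
- by move=> k.
- by move=> k; rewrite sumr_ge0 // => i _; rewrite exp_coeff_ge0.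
move=> k; apply: le_trans (dom_le (j := (2 * k)%N) k y0 _); last by left.
rewrite /ce /exp_coeff /= !normrM normrX normrN1 expr1n mul1r normfV normrX.
rewrite [`|_%:R|]ger0_norm // exprMn [X in _ <= X]mulrAC.
rewrite -mulrA [X in _ <= X]mulrC ler_pM //.
  all: try by rewrite mulr_ge0 // invr_ge0.
by rewrite mulrC ler_wpM2r // invr_ge0.
Qed.

Lemma co_cvg (t K : R) (P : nat -> R) : 0 <= K -> (forall m, `|P m| <= K ^+ m) ->
  cvgn (series (co t P)).
Proof.
move=> K0 hP; apply: normed_cvg.
have y0 : 0 <= K * `|t| by rewrite mulr_ge0.
have := @series_le_cvg _ (fun k => `|co t P k|) _ _ _ _ (dom_cvg y0); apply.
- by move=> k.
- by move=> k; rewrite sumr_ge0 // => i _; rewrite exp_coeff_ge0.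
move=> k; apply: le_trans (dom_le (j := (2 * k).+1) k y0 _); last by right.
rewrite /co /exp_coeff /= !normrM normrX normrN1 expr1n mul1r normfV normrX.
rewrite [`|_%:R|]ger0_norm // exprMn [X in _ <= X]mulrAC.
rewrite -mulrA [X in _ <= X]mulrC ler_pM //.
  all: try by rewrite mulr_ge0 // invr_ge0.
by rewrite mulrC ler_wpM2r // invr_ge0.
Qed.


Lemma ce_pow (t x : R) : ce t (fun m => x ^+ m) = cos_coeff' (t * x).
Proof.
apply/funext => k; rewrite /ce /cos_coeff' -mul2n exprMn -exprnP; ring.
Qed.

Lemma co_pow (t x : R) : co t (fun m => x ^+ m) = sin_coeff' (t * x).
Proof.
apply/funext => k; rewrite /co /sin_coeff' -mul2n exprMn -exprnP; ring.
Qed.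

Lemma key_lim (F : R -> (nat -> R) -> R^nat) (g : R -> R) (t K lam mu : R)
  (P Q : nat -> R) :
  (forall P Q, (forall m, P m = Q m) -> F t P = F t Q) ->
  (forall P c, F t (fun m => c * P m) = c *: F t P) ->
  (forall P1 P2, F t (fun m => P1 m - P2 m) = F t P1 - F t P2) ->
  (forall P1 P2, F t (fun m => P1 m + P2 m) = F t P1 + F t P2) ->
  (forall P : nat -> R, (forall m, `|P m| <= K ^+ m) -> cvgn (series (F t P))) ->
  (forall x, series (F t (fun m => x ^+ m)) @ \oo --> g (t * x)) ->
  0 <= K -> (forall m, `|P m| <= K ^+ m) ->
  (forall m, 2 * Q m = 2 * P m - lam ^+ m - mu ^+ m) ->
  g (t * mu) = - g (t * lam) ->
  limn (series (F t Q)) = limn (series (F t P)).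
Proof.
move=> Fext FZ FB FD Fcvg Fg K0 hP hQ hg.
have -> : F t Q = F t P - 2^-1 *: (F t (fun m => lam ^+ m) + F t (fun m => mu ^+ m)).
  rewrite -FD -FZ -FB; apply: Fext => m.
  have := hQ m; move=> h.
  have -> : Q m = 2^-1 * (2 * Q m) by rewrite mulrA mulVf ?mul1r.
  by rewrite h; field.
have cl' : cvgn (series (F t (fun m => lam ^+ m))) by exact: cvgP (Fg lam).
have cm' : cvgn (series (F t (fun m => mu ^+ m))) by exact: cvgP (Fg mu).
rewrite lim_seriesB //; last by apply: is_cvg_seriesZ; apply: is_cvg_seriesD.
  2: exact: Fcvg.
rewrite lim_seriesZ; last by apply: is_cvg_seriesD.
rewrite lim_seriesD // (cvg_lim _ (Fg lam)) // (cvg_lim _ (Fg mu)) // hg.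
by rewrite addrN scaler0 subr0.
Qed.

Lemma re_key (t K lam mu : R) (P Q : nat -> R) :
  0 <= K -> (forall m, `|P m| <= K ^+ m) ->
  (forall m, 2 * Q m = 2 * P m - lam ^+ m - mu ^+ m) ->
  cos (t * mu) = - cos (t * lam) ->
  limn (series (ce t Q)) = limn (series (ce t P)).
Proof.
move=> K0; apply: (@key_lim ce cos t K lam mu P Q) => //.
- by move=> P1 Q1 h; apply/funext => k; rewrite /ce h.
- move=> P1 c; apply/funext => k; rewrite /ce /=.
  rewrite (_ : forall f : R^nat, (c *: f) k = c * f k) //; ring.
- move=> P1 P2; apply/funext => k; rewrite /ce /=.
  rewrite (_ : forall f g : R^nat, (f - g) k = f k - g k) //; ring.
- move=> P1 P2; apply/funext => k; rewrite /ce /=.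
  rewrite (_ : forall f g : R^nat, (f + g) k = f k + g k) //; ring.
- by move=> P1 hb; exact: ce_cvg K0 hb.
- by move=> x; rewrite ce_pow; exact: cvg_cos_coeff'.
Qed.

Lemma im_key (t K lam mu : R) (P Q : nat -> R) :
  0 <= K -> (forall m, `|P m| <= K ^+ m) ->
  (forall m, 2 * Q m = 2 * P m - lam ^+ m - mu ^+ m) ->
  sin (t * mu) = - sin (t * lam) ->
  limn (series (co t Q)) = limn (series (co t P)).
Proof.
move=> K0; apply: (@key_lim co sin t K lam mu P Q) => //.
- by move=> P1 Q1 h; apply/funext => k; rewrite /co h.
- move=> P1 c; apply/funext => k; rewrite /co /=.
  rewrite (_ : forall f : R^nat, (c *: f) k = c * f k) //; ring.
- move=> P1 P2; apply/funext => k; rewrite /co /=.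
  rewrite (_ : forall f g : R^nat, (f - g) k = f k - g k) //; ring.
- move=> P1 P2; apply/funext => k; rewrite /co /=.
  rewrite (_ : forall f g : R^nat, (f + g) k = f k + g k) //; ring.
- by move=> P1 hb; exact: co_cvg K0 hb.
- by move=> x; rewrite co_pow; exact: cvg_sin_coeff'.
Qed.


Lemma trig_nat (m : nat) (x : R) :
  cos (x + pi * 2 * m%:R) = cos x /\ sin (x + pi * 2 * m%:R) = sin x.
Proof.
elim: m => [|m [IHc IHs]]; first by rewrite mulr0 addr0.
have -> : x + pi * 2 * m.+1%:R = (x + pi * 2 * m%:R) + pi *+ 2.
  by rewrite -natr1; ring.
by rewrite cosD2pi sinD2pi.
Qed.

Lemma trig_odd (k : int) (x : R) :
  cos (x + pi * (2 * k%:~R + 1)) = - cos x /\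
  sin (x + pi * (2 * k%:~R + 1)) = - sin x.
Proof.
suff h : cos (x + pi * 2 * k%:~R) = cos x /\ sin (x + pi * 2 * k%:~R) = sin x.
  have -> : x + pi * (2 * k%:~R + 1) = (x + pi * 2 * k%:~R) + pi.
    by rewrite mulrDr mulr1 mulrA addrA.
  by rewrite cosDpi sinDpi h.1 h.2.
case: k => m.
  by rewrite -[m%:~R]/(m%:R); exact: trig_nat.
have [hc hs] := trig_nat m.+1 (x + pi * 2 * (Negz m)%:~R).
rewrite NegzE in hc hs *.
rewrite -addrA (_ : pi * 2 * (- (m.+1)%:~R) + pi * 2 * m.+1%:R = 0) ?addr0 in hc hs.
  by split.
by rewrite mulrN addrC -[(m.+1)%:~R]/((m.+1)%:R) subrr.
Qed.

End Ana.

Arguments ce {R}.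
Arguments co {R}.
Arguments re_key {R t K lam mu P Q}.
Arguments im_key {R t K lam mu P Q}.
Arguments trig_odd {R}.

Set Implicit Arguments.
Unset Strict Implicit.
Unset Printing Implicit Defensive.

Section Mx.
Variable R : realType.
Variable n : nat.
Implicit Types H : 'M[R]_n.

Lemma mxpowS H m : mxpow H m.+1 = H *m mxpow H m.
Proof. by []. Qed.

Lemma mxpow0 H : mxpow H 0 = 1%:M.
Proof. by []. Qed.

Lemma mxpowSr H m : mxpow H m.+1 = mxpow H m *m H.
Proof.
elim: m => [|m IH]; first by rewrite mxpowS mxpow0 mulmx1 mul1mx.
by rewrite [LHS]mxpowS {1}IH mulmxA -mxpowS.
Qed.

Lemma mxpow_tr H m : (mxpow H m)^T = mxpow H^T m.
Proof.
elim: m => [|m IH]; first by rewrite !mxpow0 trmx1.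
by rewrite mxpowS trmx_mul IH -mxpowSr.
Qed.

Lemma mxpow_eig H (x : 'cV[R]_n) c m : H *m x = c *: x -> mxpow H m *m x = c ^+ m *: x.
Proof.
move=> hx; elim: m => [|m IH]; first by rewrite mxpow0 mul1mx expr0 scale1r.
by rewrite mxpowS -mulmxA IH -scalemxAr hx scalerA exprSr.
Qed.

Lemma mxpow_same H1 H2 (x : 'cV[R]_n) m :
  (forall m, H1 *m (mxpow H2 m *m x) = H2 *m (mxpow H2 m *m x)) ->
  mxpow H1 m *m x = mxpow H2 m *m x.
Proof.
move=> h; elim: m => [|m IH]; first by [].
by rewrite !mxpowS -!mulmxA IH h.
Qed.

Lemma entry_col (A : 'M[R]_n) i j : (A *m (delta_mx j 0 : 'cV_n)) i 0 = A i j.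
Proof. by rewrite -colE mxE. Qed.

Lemma mxpow_bound H m i j :
  `|mxpow H m i j| <= (\sum_i0 \sum_j0 `|H i0 j0|) ^+ m.
Proof.
set K := \sum_i0 _.
elim: m i j => [|m IH] i j.
  by rewrite mxpow0 expr0 mxE; case: (i == j); rewrite ?normr1 ?normr0.
rewrite mxpowS mxE exprS.
apply: (le_trans (ler_norm_sum _ _ _)).
apply: (@le_trans _ _ (\sum_l `|H i l| * K ^+ m)).
  by apply: ler_sum => l _; rewrite normrM ler_wpM2l.
rewrite -mulr_suml ler_wpM2r ?exprn_ge0 ?sumr_ge0 // /K.
  by move=> i0 _; rewrite sumr_ge0.
by rewrite [X in _ <= X](bigD1 i) //= lerDl sumr_ge0 // => i0 _; rewrite sumr_ge0.
Qed.

End Mx.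

Section Graph.
Variable R : realType.
Variable n : nat.
Variable e : rel 'I_n.
Variables a b : 'I_n.
Variable alpha : R.
Hypothesis esym : symmetric e.
Hypothesis eirr : irreflexive e.
Hypothesis ab : a != b.
Hypothesis twin : nbhd e a :\ b = nbhd e b :\ a.

Let L := laplacian R e.
Let v : 'cV[R]_n := delta_mx a 0 - delta_mx b 0.
Let lam := L a a - L a b.

Lemma L_tr : L^T = L.
Proof.
apply/matrixP => i j; rewrite !mxE eq_sym esym.
by case: eqVneq => // ->.
Qed.

Lemma deg_eq : #|[set k | e a k]| = #|[set k | e b k]|.
Proof.
rewrite (cardsD1 b [set k | e a k]) (cardsD1 a [set k | e b k]).
have -> : [set k | e a k] :\ b = [set k | e b k] :\ a by exact: twin.
by rewrite !inE esym.
Qed.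

Lemma twin_e i : i != a -> i != b -> e i a = e i b.
Proof.
move=> ia ib.
have : (i \in nbhd e a :\ b) = (i \in nbhd e b :\ a) by rewrite twin.
by rewrite !inE ia ib /= ![e _ i]esym.
Qed.

Lemma vE i : v i 0 = (i == a)%:R - (i == b)%:R.
Proof. by rewrite !mxE !eqxx !andbT. Qed.

Lemma Lv : L *m v = lam *: v.
Proof.
apply/matrixP => i j; rewrite (ord1 j) mulmxBr.
have hB : forall (A B : 'cV[R]_n) i, (A - B) i 0 = A i 0 - B i 0 by move=> *; rewrite !mxE.
rewrite hB !entry_col [RHS]mxE vE /lam /L !mxE.
have ba : b != a by rewrite eq_sym.
have [->|ia] := eqVneq i a.
  rewrite ?eqxx ?(negPf ab) ?(negPf ba) ?eirr /=; ring.
have [->|ib] := eqVneq i b.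
  rewrite ?eqxx ?(negPf ab) ?(negPf ba) ?eirr deg_eq esym /=; ring.
by rewrite ?eqxx ?(negPf ia) ?(negPf ib) ?(negPf ab) ?eirr twin_e // subrr /=; rewrite subrr mulr0.
Qed.


Let M := edge_mx R a b.
Let H' := L + alpha *: M.

Lemma cE (A B : 'cV[R]_n) i : (A + B) i 0 = A i 0 + B i 0.
Proof. by rewrite !mxE. Qed.
Lemma cN (A : 'cV[R]_n) i : (- A) i 0 = - A i 0.
Proof. by rewrite !mxE. Qed.
Lemma cZ c (A : 'cV[R]_n) i : (c *: A) i 0 = c * A i 0.
Proof. by rewrite !mxE. Qed.

Lemma vtx (x : 'cV[R]_n) : v^T *m x = (x a 0 - x b 0)%:M.
Proof.
rewrite /v linearB /= !trmx_delta mulmxBl -!rowE.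
by apply/matrixP => i j; rewrite (ord1 i) (ord1 j) !mxE eqxx mulr1n.
Qed.

Lemma Mx (x : 'cV[R]_n) : M *m x = (x a 0 - x b 0) *: v.
Proof. by rewrite /M /edge_mx -/v -mulmxA vtx mul_mx_scalar. Qed.

Lemma H'x (x : 'cV[R]_n) : H' *m x = L *m x + (alpha * (x a 0 - x b 0)) *: v.
Proof. by rewrite /H' mulmxDl -scalemxAl Mx scalerA. Qed.

Lemma va : v a 0 = 1.
Proof. by rewrite vE eqxx (negPf ab) subr0. Qed.
Lemma vb : v b 0 = -1.
Proof. by rewrite vE eqxx eq_sym (negPf ab) sub0r. Qed.

Lemma H'v : H' *m v = (lam + 2 * alpha) *: v.
Proof. by rewrite H'x Lv va vb -scalerDl; congr (_ *: _); ring. Qed.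

Lemma vtL (x : 'cV[R]_n) m :
  (mxpow L m *m x) a 0 - (mxpow L m *m x) b 0 = lam ^+ m * (x a 0 - x b 0).
Proof.
have h : v^T *m (mxpow L m *m x) = lam ^+ m *: (v^T *m x).
  rewrite mulmxA -[v^T *m _]trmxK trmx_mul trmxK mxpow_tr L_tr.
  by rewrite (@mxpow_eig _ _ _ _ _ m Lv) linearZ /= -scalemxAl.
move: h; rewrite !vtx => /matrixP /(_ 0 0); rewrite !mxE eqxx !mulr1n.
by [].
Qed.

Lemma H'_same (x : 'cV[R]_n) m : x a 0 = x b 0 ->
  mxpow H' m *m x = mxpow L m *m x.
Proof.
move=> hx; apply: mxpow_same => k.
by rewrite H'x vtL hx subrr mulr0 mulr0 scale0r addr0.
Qed.

Lemma key_ab m :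
  2 * mxpow H' m a b = 2 * mxpow L m a a - lam ^+ m - (lam + 2 * alpha) ^+ m.
Proof.
set ea : 'cV[R]_n := delta_mx a 0; set eb : 'cV[R]_n := delta_mx b 0.
set s := ea + eb.
have sab : s a 0 = s b 0.
  by rewrite /s !cE /ea /eb !mxE !eqxx /= !andbT eq_sym addrC.
have h1 : 2 *: eb = s - v by rewrite /s /v /ea /eb scaler_nat; apply/matrixP => i j; rewrite !mxE; ring.
have h2 : 2 *: ea = s + v by rewrite /s /v /ea /eb scaler_nat; apply/matrixP => i j; rewrite !mxE; ring.
have e1 : 2 * mxpow H' m a b = (mxpow L m *m s) a 0 - (lam + 2 * alpha) ^+ m.
  rewrite -(@entry_col _ _ (mxpow H' m) a b) -/eb -cZ scalemxAr h1 mulmxBr H'_same //.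
  by rewrite (@mxpow_eig _ _ _ _ _ m H'v) cE cN cZ va mulr1.
have e2 : 2 * mxpow L m a a = (mxpow L m *m s) a 0 + lam ^+ m.
  rewrite -(@entry_col _ _ (mxpow L m) a a) -/ea -cZ scalemxAr h2 mulmxDr.
  by rewrite (@mxpow_eig _ _ _ _ _ m Lv) cE cZ va mulr1.
rewrite e1 e2; ring.
Qed.

Lemma key_p p m : p != a -> p != b -> mxpow H' m p p = mxpow L m p p.
Proof.
move=> pa pb; rewrite -(@entry_col _ _ (mxpow H' m) p p) -(@entry_col _ _ (mxpow L m) p p) H'_same //.
by rewrite !mxE eq_sym (negPf pa) eq_sym (negPf pb).
Qed.


Lemma qw_reE (H : 'M[R]_n) (t : R) i j : qw_re H t i j = limn (series (ce t (fun m => mxpow H m i j))).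
Proof. by []. Qed.
Lemma qw_imE (H : 'M[R]_n) (t : R) i j : qw_im H t i j = - limn (series (co t (fun m => mxpow H m i j))).
Proof. by []. Qed.

Lemma pst_a (tau : R) (k : int) : 2 * alpha * tau = pi * (2 * k%:~R + 1) ->
  qw_re H' tau a b = qw_re L tau a a /\ qw_im H' tau a b = qw_im L tau a a.
Proof.
move=> hk.
have K0 : 0 <= \sum_i0 \sum_j0 `|L i0 j0| by rewrite sumr_ge0 // => *; rewrite sumr_ge0.
have hb := fun m => mxpow_bound L m a a.
have hm : tau * (lam + 2 * alpha) = tau * lam + pi * (2 * k%:~R + 1).
  by rewrite -hk; ring.
have [hc hs] := trig_odd k (tau * lam).
rewrite qw_reE qw_imE qw_reE qw_imE; split.
  apply: (re_key K0 hb key_ab); by rewrite hm.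
congr (- _); apply: (im_key K0 hb key_ab); by rewrite hm.
Qed.

Lemma per_p (tau : R) p : p != a -> p != b ->
  qw_re H' tau p p = qw_re L tau p p /\ qw_im H' tau p p = qw_im L tau p p.
Proof.
move=> pa pb; rewrite qw_reE qw_imE qw_reE qw_imE.
have h : (fun m => mxpow H' m p p) = (fun m => mxpow L m p p).
  by apply/funext => m; exact: key_p.
by rewrite h.
Qed.

Lemma H'_tr : H'^T = H'.
Proof.
by rewrite /H' linearD /= linearZ /= L_tr /M /edge_mx trmx_mul trmxK.
Qed.

Lemma H'_sym m : mxpow H' m a b = mxpow H' m b a.
Proof.
by rewrite -[in RHS]H'_tr -mxpow_tr mxE.
Qed.

End Graph.

Lemma edge_mx_sym (R : realType) n (a b : 'I_n) : edge_mx R b a = edge_mx R a b.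
Proof.
rewrite /edge_mx -opprB.
by rewrite (linearN (@trmx R n 1) (delta_mx a 0 - delta_mx b 0)) mulNmx mulmxN opprK.
Qed.

Theorem theorem2p4 (R : realType) (n : nat) (e : rel 'I_n) (a b p : 'I_n)
    (alpha tau : R) :
  simple_connected_graph e ->
  a != b ->
  nbhd e a :\ b = nbhd e b :\ a ->
  tau != 0 ->
  periodic_at (laplacian R e) p tau ->
  ((p \in [:: a; b]) ->
     (exists k : int, 2 * alpha * tau = pi * (2 * k%:~R + 1)) ->
     pst (laplacian R e + alpha *: edge_mx R a b) a b tau)
  /\
  ((p \notin [:: a; b]) ->
     periodic_at (laplacian R e + alpha *: edge_mx R a b) p tau).
Proof.
move=> [esym [eirr _]] ab twin _ hper; split.
  rewrite !inE => /orP[] /eqP hp [k hk]; subst p.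
    rewrite /pst /qw_abs2.
    have [h1 h2] := pst_a esym ab twin hk.
    by rewrite h1 h2.
  have ba : b != a by rewrite eq_sym.
  rewrite /pst /qw_abs2 !qw_reE !qw_imE.
  have -> : (fun m => mxpow (laplacian R e + alpha *: edge_mx R a b) m a b) =
            (fun m => mxpow (laplacian R e + alpha *: edge_mx R a b) m b a).
    by apply/funext => m; exact: H'_sym.
  rewrite -!qw_reE -!qw_imE -edge_mx_sym.
  have [h1 h2] := pst_a esym ba (Logic.eq_sym twin) hk.
  by rewrite h1 h2.
rewrite !inE negb_or => /andP[pa pb].
rewrite /periodic_at /qw_abs2.
have [h1 h2] := per_p alpha esym ab twin tau pa pb.
by rewrite h1 h2.
Qed.
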